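(* Let $A$ be a circular $m\times n$ matrix, $b\in\mathbb{Z}_+^m$ and $x^*\in Q(A,b)$ such that every circuit in $D(A,x^* )$ has non-negative cost. Then $x^*\in Q^*(A,b)$.
   Context: Notation: $[n]=\{1,\dots,n\}$ with addition mod $n$ (index $0$ identified with $n$); for $a,c\in[n]$ with $t\ge0$ minimal such that $a+t\equiv c\pmod n$, $[a,c)_n=\{a,\dots,a+t-1\}$ (mod $n$). An $m\times n$ $\{0,1\}$-matrix $A$ is circular if for each row $i$ there are $\ell_i\in[n]$ and an integer $2\le k_i\le n-1$ with row $i$ the incidence vector of $[\ell_i,\ell_i+k_i)_n$. $Q(A,b)=\{x\ge0:Ax\ge b\}$, $Q^*(A,b)=\operatorname{conv}(Q(A,b)\cap\mathbb{Z}^n)$. $D(A)$: digraph (multigraph allowed) on node set $[n]$ (labels mod $n$) with forward arcs $a_i=(\ell_i-1,\ell_i+k_i-1)$ ($i\in[m]$) and $a_{m+j}=(j-1,j)$ ($j\in[n]$), and reverse arcs $\bar a_i=(\ell_i+k_i-1,\ell_i-1)$ ($i\in[m]$) and $\bar a_{m+j}=(j,j-1)$ ($j\in[n]$). A circuit is a simple directed circuit. Costs: $\tilde A=\binom{A}{I}\in\{0,1\}^{(m+n)\times n}$ ($I$ the $n\times n$ identity), $d=\binom{b}{0}\in\mathbb{Z}^{m+n}$, $v$ = last column of $\tilde A$. For $x^*\in Q(A,b)$: $s^*=\tilde Ax^*-d$, $\mu=\lceil\mathbf{1}^Tx^*\rceil-\mathbf{1}^Tx^*$, $c^+(x^* )=\mu(s^*-(1-\mu)v)$,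 $c^-(x^* )=(1-\mu)(s^*+\mu v)$. $D(A,x^* )$ is $D(A)$ where arc $a_k$ ($k\in[m+n]$) has cost $c^+_k(x^* )$ and arc $\bar a_k$ has cost $c^-_k(x^* )$; the cost of a path is the sum of the costs of its arcs. *)

(* Defs.v *)
From HB Require Import structures.
From mathcomp Require Import all_boot all_order all_algebra.
From mathcomp Require Import reals.
Set Implicit Arguments. Unset Strict Implicit. Unset Printing Implicit Defensive.
Import Order.TTheory GRing.Theory Num.Theory.
Local Open Scope ring_scope.

(* Conventions: the paper's index set [n] = {1..n} (mod n) is represented by
   'I_n = {0..n-1} via t |-> t-1 (so paper label n, identified with 0, is 0).
   A circular row i is given by its 0-based start l i (= paper ell_i - 1)
   and its length k i: entry (i,j) (0-based column j) is 1 iff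
   (j - l i) mod n < k i, i.e. column j+1 lies in [ell_i, ell_i + k_i)_n. *)

Section Defs.
Variables (R : realType) (m n : nat).

Definition circ_mx (l : 'I_m -> 'I_n) (k : 'I_m -> nat) : 'M[R]_(m, n) :=
  \matrix_(i < m, j < n) (if ((j + n - l i) %% n < k i)%N then 1 else 0).

Definition circular (A : 'M[R]_(m, n)) (l : 'I_m -> 'I_n) (k : 'I_m -> nat) :=
  (forall i, 2 <= k i <= n.-1)%N /\ A = circ_mx l k.

Definition inQ (A : 'M[R]_(m, n)) (b : 'I_m -> nat) (x : 'cV[R]_n) : Prop :=
  (forall j, 0 <= x j 0) /\ (forall i, (b i)%:R <= (A *m x) i 0).

Definition inQstar (A : 'M[R]_(m, n)) (b : 'I_m -> nat) (x : 'cV[R]_n) : Prop :=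
  exists (p : nat) (pts : 'I_p -> 'cV[R]_n) (lam : 'I_p -> R),
    [/\ forall t, inQ A b (pts t),
        forall t j, pts t j 0 \is a Num.int,
        forall t, 0 <= lam t,
        \sum_(t < p) lam t = 1
      & x = \sum_(t < p) lam t *: pts t].

(* Arcs of D(A): index k in [m+n] is inl i (k = i, i in [m]) or inr j
   (k = m + j); the bool is true for forward arcs a_k, false for reverse
   arcs \bar a_k. *)
Definition darc := (('I_m + 'I_n) * bool)%type.

Definition nsucc (a : nat) : nat := (a %% n)%N.

Variables (l : 'I_m -> 'I_n) (k : 'I_m -> nat).

(* forward arc endpoints: node labels of the paper taken mod n (label n = 0);
   a_i = (ell_i - 1, ell_i + k_i - 1) = (l i, l i + k i), a_(m+j) = (j-1, j)
   with the 0-based column index j0 = j-1 of inr j0. *)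
Definition ftail (e : 'I_m + 'I_n) : nat :=
  match e with inl i => l i | inr j => j end.
Definition fhead (e : 'I_m + 'I_n) : nat :=
  match e with inl i => (l i + k i)%N | inr j => j.+1 end.

Definition atail (a : darc) : nat :=
  nsucc (if a.2 then ftail a.1 else fhead a.1).
Definition ahead (a : darc) : nat :=
  nsucc (if a.2 then fhead a.1 else ftail a.1).

(* A circuit: simple directed closed walk, given by its nonempty sequence of
   arcs e_1 ... e_p with head e_t = tail e_(t+1) cyclically and distinct
   tails (hence distinct nodes). *)
Definition circuit (c : seq darc) : bool :=
  [&& c != [::], cycle (fun e f => ahead e == atail f) c & uniq (map atail c)].

Variable (A : 'M[R]_(m, n)) (b : 'I_m -> nat) (x : 'cV[R]_n).

(* s^* = tilde A x^* - d *)
Definition sstar (e : 'I_m + 'I_n) : R :=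
  match e with inl i => (A *m x) i 0 - (b i)%:R | inr j => x j 0 end.

Definition vlast (e : 'I_m + 'I_n) : R :=
  match e with
  | inl i => \sum_(j < n | (j : nat) == n.-1) A i j (* = A i (last column) *)
  | inr j => (if j == n.-1 :> nat then 1 else 0)
  end.

Definition mu : R :=
  let s := \sum_(j < n) x j 0 in (Num.ceil s)%:~R - s.

Definition cplus (e : 'I_m + 'I_n) : R := mu * (sstar e - (1 - mu) * vlast e).
Definition cminus (e : 'I_m + 'I_n) : R := (1 - mu) * (sstar e + mu * vlast e).

Definition arc_cost (a : darc) : R := if a.2 then cplus a.1 else cminus a.1.

Definition path_cost (c : seq darc) : R := \sum_(a <- c) arc_cost a.

End Defs.

(* Main.v *)
Require Import Defs.
From HB Require Import structures.
From mathcomp Require Import all_boot all_order all_algebra.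
From mathcomp Require Import reals.
From mathcomp Require Import zify ring lra.
Import Order.TTheory GRing.Theory Num.Theory.
Local Open Scope ring_scope.

Set Implicit Arguments. Unset Strict Implicit. Unset Printing Implicit Defensive.

Section Graph.
Variables (R : realType) (E : finType) (tl hd : E -> nat) (w : E -> R) (N : nat) (e0 : E).
Hypothesis Htl : forall e, (tl e < N)%N.
Hypothesis Hcirc : forall c : seq E, c != [::] ->
  cycle (fun e f => hd e == tl f) c -> uniq (map tl c) -> 0 <= \sum_(e <- c) w e.

Definition walkf (f : nat -> E) (p : nat) :=
  forall t, (t.+1 < p)%N -> hd (f t) = tl (f t.+1).
Definition costf (f : nat -> E) (p : nat) := \sum_(0 <= t < p) w (f t).

Lemma cost_mkseq f p : \sum_(e <- mkseq f p) w e = costf f p.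
Proof. by rewrite /mkseq big_map /costf /index_iota subn0. Qed.

Lemma cycle_mkseq f p : (0 < p)%N -> walkf f p -> hd (f p.-1) = tl (f 0%N) ->
  cycle (fun e f => hd e == tl f) (mkseq f p).
Proof.
move=> p0 Hw Hc; rewrite (cycle_path e0) -nth_last size_mkseq nth_mkseq; last by lia.
apply/(pathP e0) => i; rewrite size_mkseq => ip.
rewrite nth_mkseq //; case: i ip => [|i] ip /=; first by rewrite Hc.
by rewrite nth_mkseq ?Hw // ltnW.
Qed.

Section Split.
Variables (f : nat -> E) (p i j : nat).
Hypothesis (ij : (i < j)%N) (jp : (j < p)%N) (Hw : walkf f p) (Htj : tl (f i) = tl (f j)).
Let d := (j - i)%N.
Definition segf t := f (t + i)%N.
Definition restf t := if (t < i)%N then f t else f (t + d)%N.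

Lemma seg_walk : walkf segf d.
Proof. move=> t td; rewrite /segf Hw //; lia. Qed.
Lemma seg_closed : hd (segf d.-1) = tl (segf 0%N).
Proof.
rewrite /segf add0n Htj. have -> : (d.-1 + i = j.-1)%N by rewrite /d; lia.
have j0 : (0 < j)%N by lia.
by rewrite Hw prednK //; lia.
Qed.
Lemma rest_walk : walkf restf (p - d).
Proof.
move=> t td; rewrite /restf.
case: (ltnP t.+1 i) => h1.
  by rewrite (ltnW h1) Hw //; lia.
case: (ltnP t i) => h2.
  have -> : t = i.-1 by lia.
  rewrite Hw; last lia. by rewrite prednK ?Htj; [congr (tl (f _)); rewrite /d; lia | lia].
rewrite Hw; last lia. by congr (tl (f _)); lia.
Qed.
Lemma rest_last : restf (p - d).-1 = f p.-1.
Proof. rewrite /restf ifF; last (apply/negbTE; rewrite -leqNgt; lia). congr f; rewrite /d; lia. Qed.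
Lemma rest_first : tl (restf 0%N) = tl (f 0%N).
Proof. rewrite /restf; case: ifP => // /negbT; rewrite -leqNgt leqn0 => /eqP i0.
by rewrite add0n /d i0 subn0 -Htj i0. Qed.
Lemma split_cost : costf f p = costf segf d + costf restf (p - d).
Proof.
rewrite /costf (big_cat_nat (n:=i)) ?(ltnW (ltn_trans ij jp)) //=.
rewrite (big_cat_nat (m:=i) (n:=j)) ?(ltnW ij) ?(ltnW jp) //=.
rewrite [X in _ = _ + X](big_cat_nat (n:=i)) //=; last lia.
have -> : \sum_(0 <= t < i) w (restf t) = \sum_(0 <= t < i) w (f t).
  by apply: eq_big_nat => t /andP[_ ti]; rewrite /restf ti.
have -> : \sum_(i <= t < p - d) w (restf t) = \sum_(j <= t < p) w (f t).
  have -> : j = (i + d)%N by rewrite /d; lia.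
  rewrite big_addn; apply: eq_big_nat => t /andP[it _].
  by rewrite /restf ltnNge it.
have -> : \sum_(i <= t < j) w (f t) = \sum_(0 <= t < d) w (segf t).
  by rewrite -{1}(add0n i) big_addn.
by rewrite addrCA addrA.
Qed.
End Split.

Lemma closed_nonneg p f : (0 < p)%N -> walkf f p -> hd (f p.-1) = tl (f 0%N) ->
  0 <= costf f p.
Proof.
elim: p {-2}p (leqnn p) f => [|P IH] p pP f p0 Hw Hc; first by lia.
case U: (uniq (map tl (mkseq f p))).
  rewrite -cost_mkseq; apply: Hcirc => //; last exact: cycle_mkseq.
  by rewrite -size_eq0 size_mkseq -lt0n.
move/negbT: U => /(uniqPn 0%N) [i [j [ij]]]; rewrite size_map size_mkseq => jp.
rewrite !(nth_map e0) ?size_mkseq ?(ltn_trans ij) // !nth_mkseq ?(ltn_trans ij) // => Htj.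
rewrite (split_cost ij jp) //.
apply: addr_ge0.
  apply: IH; [lia|lia|exact: (seg_walk ij jp Hw Htj)|exact: (seg_closed ij jp Hw Htj)].
apply: IH; [lia|lia|exact: (rest_walk ij jp Hw Htj)|].
by rewrite (rest_last ij jp Htj) (rest_first Htj).
Qed.

Lemma shorten p f : (0 < p)%N -> walkf f p -> exists q g,
  [/\ (0 < q)%N, (q <= N)%N, walkf g q, g q.-1 = f p.-1 & costf g q <= costf f p].
Proof.
elim: p {-2}p (leqnn p) f => [|P IH] p pP f p0 Hw; first by lia.
case: (leqP p N) => pN; first by exists p, f.
case U: (uniq (map tl (mkseq f p))).
  have := uniq_leq_size U (s2 := iota 0 N).
  rewrite size_map size_mkseq size_iota => H; have : (p <= N)%N.
    apply: H => z /mapP [e /mapP [t _ ->] ->]; rewrite mem_iota add0n Htl //.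
  lia.
move/negbT: U => /(uniqPn 0%N) [i [j [ij]]]; rewrite size_map size_mkseq => jp.
rewrite !(nth_map e0) ?size_mkseq ?(ltn_trans ij) // !nth_mkseq ?(ltn_trans ij) // => Htj.
have h1 : (p - (j - i) <= P)%N by lia.
have h2 : (0 < p - (j - i))%N by lia.
have [q [g [q0 qN gw gl gc]]] := IH _ h1 (restf f i j) h2 (rest_walk ij jp Hw Htj).
exists q, g; split => //; first by rewrite gl (rest_last ij jp Htj).
rewrite (split_cost ij jp Htj).
have := closed_nonneg (p := (j - i)%N) (f := segf f i) _ (seg_walk ij jp Hw Htj) (seg_closed ij jp Hw Htj).
move=> H; have {H} H : 0 <= costf (segf f i) (j - i) by apply: H; lia.
lra.
Qed.

Fixpoint allseqs (k : nat) : seq (seq E) :=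
  if k is k'.+1 then [::] :: [seq e :: s | e <- enum E, s <- allseqs k'] else [:: [::]].

Lemma mem_allseqs k s : (size s <= k)%N -> s \in allseqs k.
Proof.
elim: k s => [|k IH] [|e s] //= H.
rewrite in_cons; apply/orP; right; apply: allpairs_f; first by rewrite mem_enum.
exact: IH.
Qed.

Definition walkb (s : seq E) :=
  all (fun t => hd (nth e0 s t) == tl (nth e0 s t.+1)) (iota 0 (size s).-1).
Definition okv v (s : seq E) :=
  [&& (0 < size s)%N, walkb s & hd (nth e0 s (size s).-1) == v].
Definition scost (s : seq E) := \sum_(e <- s) w e.

Lemma walkbP s : walkb s <-> walkf (nth e0 s) (size s).
Proof.
split.
  move=> /allP H t ts; apply/eqP/H; rewrite mem_iota; lia.
move=> H; apply/allP => t; rewrite mem_iota => /andP[_ ts]; apply/eqP/H; lia.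
Qed.

Lemma scost_nth s : scost s = costf (nth e0 s) (size s).
Proof. by rewrite /scost (big_nth e0). Qed.

Definition minl (L : seq (seq E)) (P : pred (seq E)) :=
  foldr (fun s acc => if P s then Order.min (scost s) acc else acc) 0 L.

Lemma minl_le0 (L : seq (seq E)) (P : pred (seq E)) : minl L P <= 0.
Proof.
elim: L => //= s L IH; case: ifP => // _; rewrite ge_min IH; by apply/orP; right.
Qed.
Lemma minl_le (L : seq (seq E)) (P : pred (seq E)) s : s \in L -> P s -> minl L P <= scost s.
Proof.
elim: L => //= s' L IH; rewrite in_cons => /orP[/eqP <- -> | sL Ps].
  by rewrite ge_min lexx.
case: ifP => _; last exact: IH.
by rewrite ge_min (IH sL Ps) orbT.
Qed.
Lemma minl_ge (L : seq (seq E)) (P : pred (seq E)) z : z <= 0 -> (forall s, s \in L -> P s -> z <= scost s) -> z <= minl L P.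
Proof.
move=> z0; elim: L => //= s L IH H.
have IH' : z <= minl L P by apply: IH => s' s'L; apply: H; rewrite in_cons s'L orbT.
case: ifP => Ps //; rewrite le_min IH' andbT; apply: H => //; by rewrite in_cons eqxx.
Qed.

Definition pot v := minl (allseqs N) (okv v).

Lemma pot_le p f : (0 < p)%N -> walkf f p -> pot (hd (f p.-1)) <= costf f p.
Proof.
move=> p0 Hw; have [q [g [q0 qN gw gl gc]]] := shorten p0 Hw.
apply: le_trans gc.
have -> : costf g q = scost (mkseq g q) by rewrite /scost cost_mkseq.
rewrite -gl; apply: minl_le; first by apply: mem_allseqs; rewrite size_mkseq.
rewrite /okv size_mkseq q0 /= nth_mkseq ?eqxx ?andbT; last lia.
apply/walkbP; rewrite size_mkseq => t tq; rewrite !nth_mkseq; [exact: gw|lia|lia].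
Qed.

Lemma potential_exists : exists pi : nat -> R, forall e, pi (hd e) <= pi (tl e) + w e.
Proof.
exists pot => e.
rewrite -lerBlDr; apply: minl_ge.
  rewrite lerBlDr add0r.
  have := pot_le (p := 1%N) (f := fun _ => e) isT (fun t (H : (t.+1 < 1)%N) => False_ind _ (notF H)).
  by rewrite /costf big_nat1.
move=> s _ /and3P[s0 /walkbP sw /eqP sl].
rewrite lerBlDr.
pose f t := if (t < size s)%N then nth e0 s t else e.
have fw : walkf f (size s).+1.
  move=> t ts; rewrite /f; case: (ltnP t.+1 (size s)) => h.
    by rewrite (ltnW h) sw.
  have -> : t = (size s).-1 by lia.
  by rewrite ifT //; lia.
have := pot_le (ltn0Sn _) fw; rewrite /= /f ltnn.
rewrite /costf big_nat_recr //= ltnn scost_nth.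
have -> : \sum_(0 <= t < size s) w (if (t < size s)%N then nth e0 s t else e) =
  \sum_(0 <= t < size s) w (nth e0 s t).
  by apply: eq_big_nat => t /andP[_ ->].
done.
Qed.
End Graph.
Section CC.
Variable R : realType.

Definition ccomb N (P : 'cV[R]_N -> Prop) (y : 'cV[R]_N) :=
  exists s : seq (R * 'cV[R]_N),
    [/\ forall z, z \in s -> P z.2 /\ 0 <= z.1,
        \sum_(z <- s) z.1 = 1 & y = \sum_(z <- s) z.1 *: z.2].

Lemma ccomb1 N (P : 'cV[R]_N -> Prop) y : P y -> ccomb P y.
Proof.
move=> Py; exists [:: (1, y)]; split; last by rewrite big_seq1 scale1r.
  by move=> z; rewrite inE => /eqP -> /=; split.
by rewrite big_seq1.
Qed.

Lemma ccomb_mix N (P : 'cV[R]_N -> Prop) y1 y2 a : 0 <= a <= 1 ->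
  ccomb P y1 -> ccomb P y2 -> ccomb P (a *: y1 + (1 - a) *: y2).
Proof.
move=> /andP[a0 a1] [s1 [H1 S1 E1]] [s2 [H2 S2 E2]].
exists ([seq (a * z.1, z.2) | z <- s1] ++ [seq ((1 - a) * z.1, z.2) | z <- s2]); split.
- move=> z; rewrite mem_cat => /orP[] /mapP [z' z's ->] /=.
    by have [] := H1 _ z's; split => //; apply: mulr_ge0.
  by have [] := H2 _ z's; split => //; apply: mulr_ge0 => //; lra.
- rewrite big_cat !big_map /= -!mulr_sumr S1 S2; ring.
- rewrite big_cat !big_map /= E1 E2 !scaler_sumr; congr (_ + _); apply: eq_bigr => z _; by rewrite scalerA.
Qed.

Lemma ccomb_map N M (P : 'cV[R]_N -> Prop) (P' : 'cV[R]_M -> Prop) (f : 'cV[R]_N -> 'cV[R]_M) y :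
  (forall s : seq (R * 'cV[R]_N), f (\sum_(z <- s) z.1 *: z.2) = \sum_(z <- s) z.1 *: f z.2) ->
  (forall z, P z -> P' (f z)) -> ccomb P y -> ccomb P' (f y).
Proof.
move=> Hf HP [s [H S E]]; exists [seq (z.1, f z.2) | z <- s]; split.
- move=> z /mapP [z' z's ->] /=; have [] := H _ z's; split => //; exact: HP.
- by rewrite big_map.
- by rewrite E Hf big_map.
Qed.

Definition satc N (cs : seq ('I_N * 'I_N * int)) (Y : 'cV[R]_N) :=
  forall c, c \in cs -> (c.2)%:~R <= Y c.1.1 0 - Y c.1.2 0.

Lemma exists_max (T : finType) (F : T -> R) (t0 : T) : exists t1, forall t, F t <= F t1.
Proof.
suff [t1 H] : exists t1, forall t, t \in enum T -> F t <= F t1.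
  by exists t1 => t; apply: H; rewrite mem_enum.
elim: (enum T) => [|a s [t1 H]]; first by exists t0.
case: (leP (F a) (F t1)) => h.
  exists t1 => t; rewrite inE => /orP[/eqP -> //|]; exact: H.
exists a => t; rewrite inE => /orP[/eqP -> //|ts]; apply: le_trans (H _ ts) _; exact: ltW.
Qed.

Lemma round_cc N (cs : seq ('I_N * 'I_N * int)) (Y : 'cV[R]_N) : satc cs Y ->
  ccomb (fun Z => satc cs Z /\ forall t, Z t 0 \is a Num.int) Y.
Proof.
move: {2}#|[set t | Y t 0 \isn't a Num.int]| (leqnn #|[set t | Y t 0 \isn't a Num.int]|) => K.
elim: K Y => [|K IH] Y HK HY.
  apply: ccomb1; split => // t; apply/negPn/negP => Ht.
  move: HK; rewrite leqn0 cards_eq0 => /eqP /setP /(_ t); by rewrite inE Ht inE.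
case: (boolP [forall t, Y t 0 \is a Num.int]) => [/forallP Hall|].
  by apply: ccomb1; split.
rewrite negb_forall => /existsP [t0 Ht0].
pose dl t := (Num.ceil (Y t 0))%:~R - Y t 0.
have dl0 t : 0 <= dl t by rewrite /dl subr_ge0 ceil_ge.
have dl1 t : dl t < 1.
  by have := ceilB1_lt (Y t 0); rewrite /dl rmorphB /=; lra.
have dlint t : (Y t 0 \is a Num.int) = (dl t == 0).
  by rewrite intrEceil /dl subr_eq0.
have [ts Hts] := exists_max dl t0.
set D := dl ts.
have D0 : 0 < D.
  rewrite lt_def dl0 andbT; apply: contraNN Ht0 => /eqP h.
  rewrite dlint eq_le dl0 andbT; rewrite -h; exact: Hts.
have D1 : D < 1 by apply: dl1.
pose Z := \col_(t < N) ((Num.ceil (Y t 0))%:~R : R).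
pose Y' := \col_(t < N) (Z t 0 - dl t / D).
have EY : Y = (1 - D) *: Z + (1 - (1 - D)) *: Y'.
  apply/matrixP => t j; rewrite (ord1 j) !mxE /dl.
  field; lra.
rewrite EY; apply: ccomb_mix; first lra.
  apply: ccomb1; split; last by move=> t; rewrite mxE intr_int.
  move=> [[u v] c] /HY /= H; rewrite !mxE -rmorphB /= ler_int.
  have : Num.ceil (Y v 0 + c%:~R) <= Num.ceil (Y u 0) by apply: le_ceil; lra.
  by rewrite ceilDrz ?intr_int // intrKceil lerBrDr addrC.
have HY' : satc cs Y'.
  move=> [[u v] c] /HY /= H; rewrite !mxE.
  have au : dl u / D <= 1 by rewrite ler_pdivrMr // mul1r.
  have bv : 0 <= dl v / D by apply: divr_ge0 => //; exact: ltW.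
  have au0 : 0 <= dl u / D by apply: divr_ge0 => //; exact: ltW.
  have : Num.ceil (Y v 0 + c%:~R) <= Num.ceil (Y u 0) by apply: le_ceil; lra.
  rewrite ceilDrz ?intr_int // intrKceil => Hc.
  move: H au bv au0; rewrite /dl.
  set cu := Num.ceil (Y u 0) in Hc *; set cv := Num.ceil (Y v 0) in Hc *.
  move=> H au bv au0; move: H.
  case: (boolP (cu == cv + c)) => [/eqP E | NE].
    have Ecr : (cu%:~R : R) = cv%:~R + c%:~R by rewrite E rmorphD.
    move=> H.
    have : dl u <= dl v by rewrite /dl; lra.
    move=> h; have : dl u / D <= dl v / D by rewrite ler_pM2r // invr_gt0.
    rewrite /dl; lra.
  have : cv + c + 1 <= cu.
    have L : forall a b d : int, b + d <= a -> a != b + d -> b + d + 1 <= a by move=> a b d; lia.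
    exact: L.
  rewrite -(ler_int R) !rmorphD /= rmorph1 => h _; lra.
apply: IH => //.
have Hp : [set t | Y' t 0 \isn't a Num.int] \proper [set t | Y t 0 \isn't a Num.int].
  apply/properP; split.
    apply/subsetP => t; rewrite !inE; apply: contraNN => Ht.
    move: Ht; rewrite dlint => /eqP Ht; rewrite !mxE Ht mul0r subr0 intr_int //.
  exists ts; rewrite !inE; last first.
    by rewrite negbK !mxE -/D divff ?gt_eqF // -(rmorph1 (intr : int -> R)) -rmorphB intr_int.
  by rewrite dlint gt_eqF.
rewrite -ltnS; exact: leq_trans (proper_card Hp) HK.
Qed.
End CC.
Lemma modc j L n : (j < n)%N -> (L < n)%N ->
  ((j + n - L) %% n = if (L <= j)%N then j - L else j + n - L)%N.
Proof.
move=> jn Ln; case: leqP => h.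
  have -> : (j + n - L = (j - L) + n)%N by lia.
  by rewrite modnDr modn_small //; lia.
by rewrite modn_small //; lia.
Qed.

Lemma coef_nw j L K n : (j < n)%N -> (L < n)%N -> (L + K <= n)%N ->
  (((j + n - L) %% n < K) + (j < L) = (j < L + K) :> nat)%N.
Proof.
move=> jn Ln LK; rewrite modc //; case: (leqP L j) => h;
by do ! case: ltnP => ?; lia.
Qed.

Lemma coef_w j L K n : (j < n)%N -> (L < n)%N -> (K < n)%N -> (n < L + K)%N ->
  (((j + n - L) %% n < K) + (j < L) = (j < n) + (j < L + K - n) :> nat)%N.
Proof.
move=> jn Ln Kn LK; rewrite modc //; case: (leqP L j) => h;
by do ! case: ltnP => ?; lia.
Qed.

Section Row.
Variables (R : realType) (m n : nat) (l : 'I_m -> 'I_n) (k : 'I_m -> nat).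

Definition Ps (z : 'cV[R]_n) (t : nat) := \sum_(j < n) ((j < t)%N%:R * z j 0).

Lemma rowsum (i : 'I_m) (z : 'cV[R]_n) : (k i < n)%N ->
  (circ_mx R l k *m z) i 0 =
  if (l i + k i <= n)%N then Ps z (l i + k i) - Ps z (l i)
  else Ps z n - Ps z (l i) + Ps z (l i + k i - n).
Proof.
move=> kn; rewrite mxE /Ps; case: ifP => h.
  rewrite -sumrB; apply: eq_bigr => j _; rewrite mxE -mulrBl; congr (_ * _).
  have := coef_nw (ltn_ord j) (ltn_ord (l i)) h.
  move/(congr1 (fun q => q%:R : R)); rewrite natrD => <-.
  by case: ifP => _; rewrite addrK.
rewrite -sumrB -big_split; apply: eq_bigr => j _; rewrite mxE /= -mulrBl -mulrDl; congr (_ * _).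
have h' : (n < l i + k i)%N by rewrite ltnNge h.
have := coef_w (ltn_ord j) (ltn_ord (l i)) kn h'.
move/(congr1 (fun q => q%:R : R)); rewrite !natrD => E.
move: E; case: ((j + n - l i) %% n < k i)%N; case: (j < l i)%N; case: (j < n)%N;
  case: (j < l i + k i - n)%N; rewrite /= ?mulr1n ?mulr0n; lra.
Qed.
End Row.
Section Slice.
Variables (R : realType) (m n : nat) (A : 'M[R]_(m, n)) (l : 'I_m -> 'I_n) (k : 'I_m -> nat)
  (b : 'I_m -> nat).

Lemma Ps_nat (z : 'cV[R]_n) t (F : nat -> R) : (t <= n)%N -> (forall j : 'I_n, z j 0 = F j) ->
  Ps z t = \sum_(0 <= j < t) F j.
Proof.
move=> tn HF; rewrite /Ps.
rewrite (eq_bigr (fun j : 'I_n => (j < t)%N%:R * F j)); last by move=> j _; rewrite HF.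
rewrite -(big_mkord xpredT (fun j => (j < t)%N%:R * F j)) (big_cat_nat (n := t)) //=.
have -> : \sum_(t <= j < n) (j < t)%N%:R * F j = 0.
  rewrite big_nat_cond big1 // => j /andP[/andP[tj _] _]; by rewrite ltnNge tj /= mul0r.
rewrite addr0.
by apply: eq_big_nat => j /andP[_ ->]; rewrite mul1r.
Qed.

Definition vn (z : 'cV[R]_n) (j : nat) := \sum_(j' < n) ((j' == j :> nat)%:R * z j' 0).
Lemma vnE (z : 'cV[R]_n) (j : 'I_n) : z j 0 = vn z j.
Proof.
rewrite /vn (bigD1 j) //= eqxx mul1r big1 ?addr0 // => j' /negbTE h.
by rewrite (inj_eq val_inj) h mul0r.
Qed.

Lemma Ps_n (z : 'cV[R]_n) : Ps z n = \sum_(j < n) z j 0.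
Proof. by apply: eq_bigr => j _; rewrite ltn_ord mul1r. Qed.

Definition ccP (z : 'cV[R]_n) := inQ A b z /\ forall j, z j 0 \is a Num.int.

Lemma slice (beta : int) (x : 'cV[R]_n) : circular A l k -> inQ A b x ->
  \sum_(j < n) x j 0 = beta%:~R -> ccomb ccP x.
Proof.
move=> [Hk EA] [x0 Ax] Hs.
have kn i : (k i < n)%N by have := Hk i; lia.
pose Y := \col_(t < n.+1) Ps x t.
have YE t : (t <= n)%N -> Y (inord t) 0 = Ps x t by move=> tn; rewrite mxE inordK.
pose f := fun W : 'cV[R]_n.+1 => \col_(j < n) (W (inord j.+1) 0 - W (inord j) 0).
pose rowc (i : 'I_m) : 'I_n.+1 * 'I_n.+1 * int :=
  if (l i + k i <= n)%N then (inord (l i + k i), inord (l i), (b i)%:Z)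
  else (inord (l i + k i - n), inord (l i), (b i)%:Z - beta).
pose cs : seq ('I_n.+1 * 'I_n.+1 * int) :=
  [seq (inord j.+1, inord j, 0%Z) | j <- iota 0 n] ++
  ([:: (inord n, inord 0, beta); (inord 0, inord n, - beta)] ++ [seq rowc i | i <- enum 'I_m]).
have mem1 j : (j < n)%N -> (inord j.+1, inord j, 0%Z) \in cs.
  by move=> jn; rewrite mem_cat map_f // mem_iota.
have mem2 : (inord n, inord 0, beta) \in cs by rewrite !mem_cat !inE eqxx /= orbT.
have mem2' : (inord 0, inord n, - beta) \in cs by rewrite !mem_cat !inE eqxx /= !orbT.
have mem3 i : rowc i \in cs by rewrite !mem_cat map_f ?mem_enum ?orbT.
have xF := vnE x.
have Ps0 (z : 'cV[R]_n) : Ps z 0 = 0 by apply: big1 => j _; rewrite mul0r.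
have satY : satc cs Y.
  move=> c; rewrite mem_cat => /orP [/mapP [j]|]; last rewrite mem_cat => /orP[|/mapP [i _ ->]].
  - rewrite mem_iota add0n => /andP [_ jn] -> /=.
    rewrite !YE; try lia.
    rewrite (Ps_nat (t := j.+1) jn xF) (Ps_nat (t := j) (ltnW jn) xF).
    rewrite big_nat_recr //= addrC addrK rmorph0 -(xF (Ordinal jn)); exact: x0.
  - rewrite !inE => /orP[/eqP -> | /eqP ->] /=; rewrite !YE // Ps0 Ps_n Hs; lra.
  - move: (Ax i); rewrite EA rowsum // /rowc.
    have := kn i; have := ltn_ord (l i); case: ifP => h /= li ki; rewrite !YE //; try lia.
    rewrite intrB pmulrn Ps_n Hs; lra.
have Hf : forall s : seq (R * 'cV[R]_n.+1),
    f (\sum_(z <- s) z.1 *: z.2) = \sum_(z <- s) z.1 *: f z.2.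
  move=> s; apply/matrixP => j c0; rewrite !mxE !summxE -sumrB; apply: eq_bigr => z _.
  by rewrite !mxE mulrBr.
have fY : f Y = x.
  apply/matrixP => j c0; have jn := ltn_ord j; rewrite (ord1 c0) mxE !YE //; try lia.
  rewrite (Ps_nat (t := j.+1) (ltn_ord j) xF) (Ps_nat (t := j) (ltnW (ltn_ord j)) xF).
  by rewrite big_nat_recr //= addrC addrK -xF.
rewrite -fY; apply: ccomb_map Hf _ (round_cc satY).
move=> W [HW Wint].
have fWE (j : 'I_n) : f W j 0 = W (inord j.+1) 0 - W (inord j) 0 by rewrite mxE.
have PW t : (t <= n)%N -> Ps (f W) t = W (inord t) 0 - W (inord 0) 0.
  move=> tn; rewrite (Ps_nat (F := fun j => W (inord j.+1) 0 - W (inord j) 0) tn fWE).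
  by rewrite (telescope_sumr (fun j => W (inord j) 0)).
have Wn : W (inord n) 0 - W (inord 0) 0 = beta%:~R.
  have := HW _ mem2; have := HW _ mem2'; rewrite /= rmorphN /=; lra.
split; last by move=> j; rewrite mxE rpredB.
split.
  move=> j; rewrite mxE; have := HW _ (mem1 _ (ltn_ord j)); rewrite /= subr_ge0.
  by rewrite -[in X in X -> _]/(0%:~R) => /=; rewrite ?subr_ge0.
move=> i; rewrite EA rowsum //; have := HW _ (mem3 i); rewrite /rowc.
have := kn i; have := ltn_ord (l i); case: ifP => h /= li ki; rewrite !PW //; try lia.
  rewrite pmulrn; lra.
rewrite intrB pmulrn; lra.
Qed.
End Slice.
Lemma ccomb_inQstar (R : realType) m n (A : 'M[R]_(m, n)) b x :
  ccomb (ccP A b) x -> inQstar A b x.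
Proof.
move=> [s [H S E]].
exists (size s), (fun t => (nth (0, 0) s t).2), (fun t => (nth (0, 0) s t).1); split.
- by move=> t; have [[]] := H _ (mem_nth (0, 0) (ltn_ord t)).
- by move=> t; have [[]] := H _ (mem_nth (0, 0) (ltn_ord t)).
- by move=> t; have [] := H _ (mem_nth (0, 0) (ltn_ord t)).
- by rewrite -S (big_nth (0, 0)) big_mkord.
- by rewrite E (big_nth (0, 0)) big_mkord.
Qed.

Lemma divle (R : realType) (c a b : R) : 0 < c -> a <= c * b -> c^-1 * a <= b.
Proof.
move=> c0 h; rewrite -(ler_pM2l c0) mulrA divff ?gt_eqF // mul1r //.
Qed.
Lemma divge (R : realType) (c a b : R) : 0 < c -> - (c * b) <= a -> - b <= c^-1 * a.
Proof.
move=> c0 h; rewrite -(ler_pM2l c0) mulrA divff ?gt_eqF // mul1r; lra.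
Qed.

Lemma modw L K n : (n <= L + K)%N -> (L < n)%N -> (K < n)%N -> ((L + K) %% n = L + K - n)%N.
Proof.
move=> h1 h2 h3; have -> : (L + K = (L + K - n) + n)%N by lia.
rewrite modnDr modn_small; lia.
Qed.

Lemma sum_last (R : realType) n t : (0 < n)%N -> (t <= n)%N ->
  \sum_(0 <= j < t) (if j == n.-1 then 1 else 0 : R) = if t == n then 1 else 0.
Proof.
move=> n0; elim: t => [|t IH] tn; first by rewrite big_nil; case: ifP => //; lia.
rewrite big_nat_recr //= IH; last lia.
case: (t =P n.-1) => h.
  by rewrite ifF ?ifT; [rewrite add0r| lia | apply/eqP; lia].
by rewrite ifF ?ifF ?addr0 //; apply/negbTE/eqP; lia.
Qed.

Unset Implicit Arguments.

Theorem lemma3p5 (R : realType) (m n : nat) (A : 'M[R]_(m, n))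
    (l : 'I_m -> 'I_n) (k : 'I_m -> nat) (b : 'I_m -> nat) (x : 'cV[R]_n) :
  circular A l k ->
  inQ A b x ->
  (forall c : seq (darc m n), circuit l k c -> 0 <= path_cost A b x c) ->
  inQstar A b x.
Proof.
move=> Hcir HQ Hc; apply: ccomb_inQstar.
have [Hk EA] := Hcir.
have kn i : (k i < n)%N by have := Hk i; lia.
set s := \sum_(j < n) x j 0.
have muE : mu x = (Num.ceil s)%:~R - s by [].
set M := mu x in muE.
have M0 : 0 <= M by rewrite muE subr_ge0 ceil_ge.
have M1 : M < 1 by have := ceilB1_lt s; rewrite muE intrB; lra.
case: (M =P 0) => [Mz | /eqP Mnz].
  by apply: (slice (beta := Num.ceil s) Hcir HQ); rewrite -/s; lra.
have Mp : 0 < M by rewrite lt_def Mnz M0.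
have n0 : (0 < n)%N.
  case: (posnP n) => // nz.
  have s0 : s = 0 by rewrite /s big1 // => j _; have := ltn_ord j; rewrite {2}nz.
  by move: Mnz; rewrite muE s0 ceil0 subr0 eqxx.
pose e0 : darc m n := (inr (Ordinal n0), true).
have [pi Hpi] := potential_exists (tl := atail l k) (hd := ahead l k) (w := arc_cost A b x) (N := n) e0
  (fun e => ltn_pmod _ n0)
  (fun c H1 H2 H3 => Hc c (introT and3P (And3 H1 H2 H3))).
pose ind (B : bool) : R := if B then 1 else 0.
pose g := \col_(j < n) (pi (j.+1 %% n)%N - pi j + M * (1 - M) * (if (j == n.-1 :> nat) then 1 else 0)).
pose gF := (fun t : nat => pi (t.+1 %% n)%N - pi (t %% n)%N + M * (1 - M) * (if t == n.-1 then 1 else 0)).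
have gE (j : 'I_n) : g j 0 = gF j.
  by rewrite mxE /gF (modn_small (ltn_ord j)).
have Psg t : (t <= n)%N -> Ps g t = pi (t %% n)%N - pi 0%N + M * (1 - M) * (if t == n then 1 else 0).
  move=> tn; rewrite (Ps_nat (F := gF) tn gE) big_split /= -mulr_sumr sum_last //.
  by rewrite (telescope_sumr (fun t => pi (t %% n)%N)) // mod0n.
have sumg : \sum_(j < n) g j 0 = M * (1 - M).
  by rewrite -Ps_n Psg // modnn eqxx; lra.
have Hcol (j : 'I_n) : -((1 - M) * x j 0) <= g j 0 <= M * x j 0.
  have := Hpi (inr j, true); have := Hpi (inr j, false).
  rewrite /ahead /atail /arc_cost /nsucc /= /cminus /cplus /sstar /vlast -/M (modn_small (ltn_ord j)).
  rewrite mxE; case: ifP => _ h1 h2; apply/andP; split; nra.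
have np : (n.-1 < n)%N by rewrite ltn_predL.
have vE (i : 'I_m) : vlast A (inl i) = if (n <= l i + k i)%N then 1 else 0.
  rewrite /vlast EA (big_pred1 (Ordinal np)); last first.
    by move=> j /=; rewrite -(inj_eq val_inj).
  have h2 := ltn_ord (l i).
  rewrite mxE modc //=; have -> : (l i <= n.-1)%N by lia.
  by case: ifP => h1; case: ifP => h3 //; lia.
have Ag (i : 'I_m) : (A *m g) i 0 = pi ((l i + k i) %% n)%N - pi (l i) + M * (1 - M) * vlast A (inl i).
  have li := ltn_ord (l i); have ki := kn i.
  rewrite vE EA rowsum //; case: ifP => h.
    rewrite !Psg //; try lia.
    rewrite (modn_small li).
    have -> : ((l i : nat) == n) = false by apply/negbTE; rewrite neq_ltn li.
    have -> : ((l i + k i)%N == n) = (n <= l i + k i)%N by apply/eqP/idP; lia.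
    lra.
  move/negbT: h; rewrite -ltnNge => h.
  rewrite !Psg //; try lia.
  rewrite modnn eqxx (modn_small li) modw //; try lia.
  rewrite (modn_small (_ : (l i + k i - n < n)%N)); last lia.
  have -> : ((l i : nat) == n) = false by apply/negbTE; rewrite neq_ltn li.
  have -> : ((l i + k i - n)%N == n) = false by apply/negbTE; rewrite neq_ltn; apply/orP; left; lia.
  have -> : (n <= l i + k i)%N by lia.
  lra.
have Hrow (i : 'I_m) : -((1 - M) * ((A *m x) i 0 - (b i)%:R)) <= (A *m g) i 0 <= M * ((A *m x) i 0 - (b i)%:R).
  have := Hpi (inl i, true); have := Hpi (inl i, false).
  rewrite /ahead /atail /arc_cost /nsucc /= /cminus /cplus /sstar -/M (modn_small (ltn_ord (l i))) Ag.
  move=> h1 h2; apply/andP; split; nra.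
pose x1 := x - M^-1 *: g.
pose x2 := x + (1 - M)^-1 *: g.
have M1p : 0 < 1 - M by lra.
have Ex : x = M *: x1 + (1 - M) *: x2.
  apply/matrixP => j c; rewrite !mxE; field; by rewrite Mnz andbT gt_eqF.
rewrite Ex; apply: ccomb_mix; first lra.
  apply: (slice (beta := Num.ceil s - 1) Hcir).
    split => [j|i].
      have /andP[_ h] := Hcol j; move: (divle Mp h); rewrite !mxE; lra.
    rewrite mulmxBr -scalemxAr; have /andP[_ h] := Hrow i; move: (divle Mp h) (proj2 HQ i).
    have -> : (A *m x - M^-1 *: (A *m g)) i 0 = (A *m x) i 0 - M^-1 * (A *m g) i 0.
      by rewrite [LHS]mxE; congr (_ + _); rewrite mxE mxE.
    lra.
  rewrite (eq_bigr (fun j => x j 0 - M^-1 * g j 0)); last by move=> j _; rewrite !mxE.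
  rewrite sumrB -mulr_sumr sumg -/s intrB mulrA mulVf // mul1r; lra.
apply: (slice (beta := Num.ceil s) Hcir).
  split => [j|i].
    have /andP[h _] := Hcol j; move: (divge M1p h) (proj1 HQ j); rewrite !mxE; lra.
  rewrite mulmxDr -scalemxAr; have /andP[h _] := Hrow i; move: (divge M1p h) (proj2 HQ i).
  have -> : (A *m x + (1 - M)^-1 *: (A *m g)) i 0 = (A *m x) i 0 + (1 - M)^-1 * (A *m g) i 0.
    by rewrite [LHS]mxE; congr (_ + _); rewrite mxE.
  lra.
rewrite (eq_bigr (fun j => x j 0 + (1 - M)^-1 * g j 0)); last by move=> j _; rewrite !mxE.
rewrite big_split /= -mulr_sumr sumg -/s mulrCA mulVf ?gt_eqF // mulr1; lra.
Qed.
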